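(* The hyperplane arrangement $\mathrm{I}(\mathrm{A}_1\oplus\mathfrak{g}_2,\mathbf{R})$ with $\mathbf{R}=(\mathbf{2},\mathbf{7})$ has exactly four chambers inside the open dual fundamental Weyl chamber, and their adjacency graph is a chain $1-2-3-4$. With respect to the sign vector $(\varpi^{(\mathbf{2},\mathbf{7})}_5,\varpi^{(\mathbf{2},\mathbf{7})}_6,\varpi^{(\mathbf{2},\mathbf{7})}_7)$, the chambers are: chamber 1: signs $(+,+,+)$, explicitly $0<\tfrac{1}{2}\phi_2<\phi_1<\tfrac{2}{3}\phi_2,\ \phi_1<\psi_1$; chamber 2: signs $(+,+,-)$, explicitly $0<\tfrac{1}{2}\phi_2<\phi_1<\tfrac{2}{3}\phi_2,\ \phi_2-\phi_1<\psi_1<\phi_1$; chamber 3: signs $(+,-,-)$, explicitly $0<\tfrac{3}{2}\phi_1<\phi_2<2\phi_1,\ 2\phi_1-\phi_2<\psi_1<\phi_2-\phi_1$; chamber 4: signs $(-,-,-)$, explicitly $0<\tfrac{3}{2}\phi_1<\phi_2<2\phi_1,\ 0<\psi_1<2\phi_1-\phi_2$. The wall between chamber $i$ and chamber $i+1$ ($i=1,2,3$) is the hyperplane orthogonal to the weight $\varpi^{(\mathbf{2},\mathbf{7})}_{8-i}$.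
   Context: Consider the semi-simple Lie algebra $\mathfrak{g}=\mathrm{A}_1\oplus\mathfrak{g}_2$ and the bifundamental representation $(\mathbf{2},\mathbf{7})$. Weights are written $(a;b,c)$ in the basis of fundamental weights, with $(a)$ a weight of $\mathrm{A}_1$ and $(b,c)$ a weight of $\mathfrak{g}_2$; a coroot vector is $\phi=(\psi_1;\phi_1,\phi_2)$ in the basis of fundamental coroots, and a weight acts on it by the natural pairing. The open dual fundamental Weyl chamber is $\psi_1>0$, $2\phi_1-\phi_2>0$, $-3\phi_1+2\phi_2>0$. The hyperplane arrangement $\mathrm{I}(\mathfrak{g},\mathbf{R})$ consists of the hyperplanes orthogonal (kernels) to the weights of $\mathbf{R}$, restricted to this open dual fundamental Weyl chamber. The relevant weights of $(\mathbf{2},\mathbf{7})$ are $\varpi^{(\mathbf{2},\mathbf{7})}_5=(1;-2,1)$, $\varpi^{(\mathbf{2},\mathbf{7})}_6=(1;1,-1)$, $\varpi^{(\mathbf{2},\mathbf{7})}_7=(1;-1,0)$; these are the only weights of $(\mathbf{2},\mathbf{7})$ whose hyperplanes meet the interior of the Weyl chamber. Adding the summands $(\mathbf{3},\mathbf{1}),(\mathbf{1},\mathbf{14}),(\mathbf{2},\mathbf{1}),(\mathbf{1},\mathbf{7})$ to $\mathbf{R}$ does not change the chamber structure. *)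

(* Defs.v *)
From Stdlib Require Import Reals Lra ZArith List.
Open Scope R_scope.

(* A coroot vector phi = (psi1; phi1, phi2) in the basis of fundamental coroots. *)
Record coroot := Coroot { psi1 : R; phi1 : R; phi2 : R }.

(* A weight (a; b, c) in the basis of fundamental weights of A1 (+) g2. *)
Definition weight := (Z * Z * Z)%type.

Definition pairing (w : weight) (x : coroot) : R :=
  let '(a, b, c) := w in IZR a * psi1 x + IZR b * phi1 x + IZR c * phi2 x.

Definition wneg (w : weight) : weight :=
  let '(a, b, c) := w in (- a, - b, - c)%Z.

(* Weights of the 7 of g2 (fundamental weight basis, Cartan matrix
   [[2,-1],[-3,2]], simple roots (2,-1) and (-3,2)). *)
Definition weights_g2_7 : list (Z * Z) :=
  ((1, 0) :: (-1, 1) :: (2, -1) :: (0, 0) :: (-2, 1) :: (1, -1) :: (-1, 0) :: nil)%Z.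

Definition weights_2_7 : list weight :=
  map (fun bc => (1%Z, fst bc, snd bc)) weights_g2_7 ++
  map (fun bc => ((-1)%Z, fst bc, snd bc)) weights_g2_7.

Definition varpi5 : weight := (1, -2, 1)%Z.
Definition varpi6 : weight := (1, 1, -1)%Z.
Definition varpi7 : weight := (1, -1, 0)%Z.

Definition in_weyl (x : coroot) : Prop :=
  0 < psi1 x /\ 0 < 2 * phi1 x - phi2 x /\ 0 < -3 * phi1 x + 2 * phi2 x.

Definition generic (x : coroot) : Prop :=
  forall w, In w weights_2_7 -> pairing w x <> 0.

Definition region (x : coroot) : Prop := in_weyl x /\ generic x.

Definition same_side (x y : coroot) : Prop :=
  forall w, In w weights_2_7 -> (0 < pairing w x <-> 0 < pairing w y).

Definition is_chamber (S : coroot -> Prop) : Prop :=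
  exists x, region x /\ forall y, S y <-> (region y /\ same_side x y).

Definition set_eq (S T : coroot -> Prop) : Prop := forall x, S x <-> T x.

Definition vadd (x v : coroot) (t : R) : coroot :=
  Coroot (psi1 x + t * psi1 v) (phi1 x + t * phi1 v) (phi2 x + t * phi2 v).

Definition adjacent_via (w : weight) (K K' : coroot -> Prop) : Prop :=
  exists p v, in_weyl p /\ pairing w p = 0 /\
    (forall w', In w' weights_2_7 -> pairing w' p = 0 -> w' = w \/ w' = wneg w) /\
    exists eps, 0 < eps /\
      forall t, 0 < t < eps -> K (vadd p v t) /\ K' (vadd p v (- t)).

Definition adjacent (K K' : coroot -> Prop) : Prop :=
  exists w, In w weights_2_7 /\ adjacent_via w K K'.

Definition chamberK (i : nat) (x : coroot) : Prop :=
  let ps := psi1 x in let a := phi1 x in let b := phi2 x in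
  match i with
  | 1%nat => 0 < b / 2 /\ b / 2 < a /\ a < 2 / 3 * b /\ a < ps
  | 2%nat => 0 < b / 2 /\ b / 2 < a /\ a < 2 / 3 * b /\ b - a < ps /\ ps < a
  | 3%nat => 0 < 3 / 2 * a /\ 3 / 2 * a < b /\ b < 2 * a /\
             2 * a - b < ps /\ ps < b - a
  | 4%nat => 0 < 3 / 2 * a /\ 3 / 2 * a < b /\ b < 2 * a /\
             0 < ps /\ ps < 2 * a - b
  | _ => False
  end.

(* sign vector (true = +) w.r.t. (varpi5, varpi6, varpi7) *)
Definition chamber_signs (i : nat) : bool * bool * bool :=
  match i with
  | 1%nat => (true, true, true)
  | 2%nat => (true, true, false)
  | 3%nat => (true, false, false)
  | _ => (false, false, false)
  end.

Definition has_sign (b : bool) (r : R) : Prop := if b then 0 < r else r < 0.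

Definition wall (i : nat) : weight :=
  match i with 1%nat => varpi7 | 2%nat => varpi6 | _ => varpi5 end.

(* Main.v *)
Require Import Defs.
From Stdlib Require Import Reals ZArith List.
From Stdlib Require Import Lra Lia.
Open Scope R_scope.

Ltac ksolve := unfold chamberK, in_weyl, pairing, varpi5, varpi6, varpi7 in *;
  cbv zeta in *; cbn [psi1 phi1 phi2 fst snd] in *; lra.

Lemma pairing_vadd w p v t : pairing w (vadd p v t) = pairing w p + t * pairing w v.
Proof. destruct w as [[a b] c]; unfold pairing, vadd; simpl; ring. Qed.

Lemma pairing_wneg w x : pairing (wneg w) x = - pairing w x.
Proof. destruct w as [[a b] c]; unfold pairing, wneg; rewrite !opp_IZR; ring. Qed.

Lemma wneg_invol w : wneg (wneg w) = w.
Proof. destruct w as [[a b] c]; unfold wneg; rewrite !Z.opp_involutive; reflexivity. Qed.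

Lemma zero_lemma c d eps : 0 < eps ->
  (forall t, 0 < t < eps -> 0 < c + t * d /\ c - t * d < 0) -> c = 0.
Proof.
  intros He H.
  destruct (H (eps/2)) as [H1 H2]; [lra|].
  assert (Hd : 0 < d) by nra.
  destruct (Rtotal_order c 0) as [Hc|[Hc|Hc]]; auto; exfalso.
  - set (t := Rmin (eps/2) (-c/(2*d))).
    assert (T1 : t <= -c/(2*d)) by apply Rmin_r.
    assert (T2 : t <= eps/2) by apply Rmin_l.
    assert (T0 : 0 < t) by (apply Rmin_pos; [lra| apply Rdiv_lt_0_compat; lra]).
    assert (T3 : t * d <= -c/2).
    { replace (-c/2) with ((-c/(2*d)) * d) by (field; lra).
      apply Rmult_le_compat_r; lra. }
    destruct (H t) as [A B]; [lra|]. lra.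
  - set (t := Rmin (eps/2) (c/(2*d))).
    assert (T1 : t <= c/(2*d)) by apply Rmin_r.
    assert (T2 : t <= eps/2) by apply Rmin_l.
    assert (T0 : 0 < t) by (apply Rmin_pos; [lra| apply Rdiv_lt_0_compat; lra]).
    assert (T3 : t * d <= c/2).
    { replace (c/2) with ((c/(2*d)) * d) by (field; lra).
      apply Rmult_le_compat_r; lra. }
    destruct (H t) as [A B]; [lra|]. lra.
Qed.

Lemma pz_pos_neg w p v eps i j : 0 < eps ->
  (forall t, 0 < t < eps -> chamberK i (vadd p v t) /\ chamberK j (vadd p v (- t))) ->
  (forall y, chamberK i y -> 0 < pairing w y) ->
  (forall y, chamberK j y -> pairing w y < 0) -> pairing w p = 0.
Proof.
  intros He H Hi Hj. apply (zero_lemma _ (pairing w v) eps He).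
  intros t Ht. destruct (H t Ht) as [A B].
  apply Hi in A. apply Hj in B. rewrite pairing_vadd in A, B. lra.
Qed.

Lemma pz_neg_pos w p v eps i j : 0 < eps ->
  (forall t, 0 < t < eps -> chamberK i (vadd p v t) /\ chamberK j (vadd p v (- t))) ->
  (forall y, chamberK i y -> pairing w y < 0) ->
  (forall y, chamberK j y -> 0 < pairing w y) -> pairing w p = 0.
Proof.
  intros He H Hi Hj.
  assert (- pairing w p = 0); [|lra].
  apply (zero_lemma _ (- pairing w v) eps He).
  intros t Ht. destruct (H t Ht) as [A B].
  apply Hi in A. apply Hj in B. rewrite pairing_vadd in A, B. lra.
Qed.

Ltac in_tac := unfold weights_2_7, weights_g2_7; simpl;
  repeat (first [left; reflexivity | right]).

Ltac destr_in H := unfold weights_2_7, weights_g2_7 in H; simpl in H;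
  repeat (destruct H as [<-|H]); [..|contradiction].

Lemma chamber_sign i w : (1 <= i <= 4)%nat -> In w weights_2_7 ->
  (forall x, chamberK i x -> 0 < pairing w x) \/
  (forall x, chamberK i x -> pairing w x < 0).
Proof.
  intros Hi Hin.
  destruct i as [|[|[|[|[|i]]]]]; try lia; destr_in Hin;
  first [left; intros x Hx; ksolve | right; intros x Hx; ksolve].
Qed.

Lemma K_weyl i x : (1 <= i <= 4)%nat -> chamberK i x -> in_weyl x.
Proof. intros Hi Hx; destruct i as [|[|[|[|[|i]]]]]; try lia; ksolve. Qed.

Lemma K_region i x : (1 <= i <= 4)%nat -> chamberK i x -> region x.
Proof.
  intros Hi Hx. split; [eapply K_weyl; eauto|].
  intros w Hw. destruct (chamber_sign i w Hi Hw) as [A|A]; specialize (A x Hx); lra.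
Qed.

Lemma region_chamber x : region x -> exists i, (1 <= i <= 4)%nat /\ chamberK i x.
Proof.
  intros [Hw Hg].
  assert (H5 := Hg varpi5 ltac:(in_tac)).
  assert (H6 := Hg varpi6 ltac:(in_tac)).
  assert (H7 := Hg varpi7 ltac:(in_tac)).
  destruct (Rtotal_order (pairing varpi7 x) 0) as [A7|[A7|A7]]; [|contradiction|].
  2: { exists 1%nat; split; [lia|]. ksolve. }
  destruct (Rtotal_order (pairing varpi6 x) 0) as [A6|[A6|A6]]; [|contradiction|].
  2: { exists 2%nat; split; [lia|]. ksolve. }
  destruct (Rtotal_order (pairing varpi5 x) 0) as [A5|[A5|A5]]; [|contradiction|].
  2: { exists 3%nat; split; [lia|]. ksolve. }
  exists 4%nat; split; [lia|]. ksolve.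
Qed.

Lemma transfer a b : (0 < a <-> 0 < b) -> b <> 0 -> (0 < a -> 0 < b) /\ (a < 0 -> b < 0).
Proof.
  intros [H1 H2] Hb. split; intros; [auto|].
  destruct (Rtotal_order b 0) as [|[|]]; auto; try contradiction.
  specialize (H2 H0); lra.
Qed.

Lemma chamber_char i x : (1 <= i <= 4)%nat -> chamberK i x ->
  forall y, (region y /\ same_side x y) <-> chamberK i y.
Proof.
  intros Hi Hx y. split.
  - intros [[Hw Hg] Hs].
    destruct (transfer _ _ (Hs varpi5 ltac:(in_tac)) (Hg varpi5 ltac:(in_tac))) as [P5 N5].
    destruct (transfer _ _ (Hs varpi6 ltac:(in_tac)) (Hg varpi6 ltac:(in_tac))) as [P6 N6].
    destruct (transfer _ _ (Hs varpi7 ltac:(in_tac)) (Hg varpi7 ltac:(in_tac))) as [P7 N7].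
    destruct i as [|[|[|[|[|i]]]]]; try lia.
    + assert (0 < pairing varpi7 x) by ksolve. specialize (P7 H). ksolve.
    + assert (pairing varpi7 x < 0) by ksolve. specialize (N7 H).
      assert (0 < pairing varpi6 x) by ksolve. specialize (P6 H0). ksolve.
    + assert (pairing varpi6 x < 0) by ksolve. specialize (N6 H).
      assert (0 < pairing varpi5 x) by ksolve. specialize (P5 H0). ksolve.
    + assert (pairing varpi5 x < 0) by ksolve. specialize (N5 H). ksolve.
  - intros Hy. split; [eapply K_region; eauto|].
    intros w Hw. destruct (chamber_sign i w Hi Hw) as [A|A];
    pose proof (A x Hx); pose proof (A y Hy); split; intros; lra.
Qed.

Definition wit (i : nat) : coroot :=
  match i with
  | 1%nat => Coroot 5 4 7
  | 2%nat => Coroot (7/2) 4 7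
  | 3%nat => Coroot 2 4 7
  | _ => Coroot (1/2) 4 7
  end.

Lemma wit_in i : (1 <= i <= 4)%nat -> chamberK i (wit i).
Proof. intros Hi; destruct i as [|[|[|[|[|i]]]]]; try lia; simpl wit; ksolve. Qed.

Lemma adj_same i w K : (1 <= i <= 4)%nat -> In w weights_2_7 -> K = chamberK i ->
  adjacent_via w K K -> False.
Proof.
  intros Hi Hin -> [p [v [Hw [Hz [Hu [eps [He H]]]]]]].
  destruct (H (eps/2)) as [A B]; [lra|].
  destruct (chamber_sign i w Hi Hin) as [C|C];
  pose proof (C _ A); pose proof (C _ B); rewrite !pairing_vadd, Hz in *;
  rewrite <- Ropp_mult_distr_l in *; lra.
Qed.

Lemma adj_sym w K K' : adjacent_via w K K' -> adjacent_via w K' K.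
Proof.
  intros [p [v [Hw [Hz [Hu [eps [He H]]]]]]].
  exists p, (Coroot (- psi1 v) (- phi1 v) (- phi2 v)).
  split; [auto|split; [auto|split; [auto|]]]. exists eps; split; auto.
  intros t Ht. destruct (H t Ht) as [A B].
  assert (E1 : vadd p (Coroot (- psi1 v) (- phi1 v) (- phi2 v)) t = vadd p v (- t))
    by (unfold vadd; simpl; f_equal; ring).
  assert (E2 : vadd p (Coroot (- psi1 v) (- phi1 v) (- phi2 v)) (- t) = vadd p v t)
    by (unfold vadd; simpl; f_equal; ring).
  rewrite E1, E2; auto.
Qed.

Lemma adj_wneg w K K' : adjacent_via w K K' -> adjacent_via (wneg w) K K'.
Proof.
  intros [p [v [Hw [Hz [Hu He]]]]].
  exists p, v. split; auto. split; [rewrite pairing_wneg; lra|]. split; auto.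
  intros w' Hin Hz'. rewrite wneg_invol. destruct (Hu w' Hin Hz'); tauto.
Qed.

Ltac uniq_tac := intros w' Hin Hz; destr_in Hin;
  first [left; reflexivity | right; reflexivity |
         (exfalso; unfold pairing in Hz; cbn [psi1 phi1 phi2 fst snd] in Hz; lra)].

Lemma wall_adj i : (1 <= i <= 3)%nat -> adjacent_via (wall i) (chamberK i) (chamberK (S i)).
Proof.
  intros Hi. destruct i as [|[|[|[|i]]]]; try lia; simpl wall.
  - exists (Coroot 4 4 7), (Coroot 1 0 0). split; [ksolve|]. split; [ksolve|].
    split; [uniq_tac|]. exists 1; split; [lra|]. intros t Ht; split; unfold vadd; ksolve.
  - exists (Coroot 3 4 7), (Coroot 1 0 0). split; [ksolve|]. split; [ksolve|].
    split; [uniq_tac|]. exists 1; split; [lra|]. intros t Ht; split; unfold vadd; ksolve.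
  - exists (Coroot 1 4 7), (Coroot 1 0 0). split; [ksolve|]. split; [ksolve|].
    split; [uniq_tac|]. exists 1; split; [lra|]. intros t Ht; split; unfold vadd; ksolve.
Qed.

Ltac sgn := intros y Hy; ksolve.

Theorem mainTheorem7 :
  (* exactly four chambers: the chambers are exactly K1,...,K4, pairwise distinct *)
  (forall S, is_chamber S <->
     exists i, (1 <= i <= 4)%nat /\ set_eq S (chamberK i)) /\
  (forall i j, (1 <= i <= 4)%nat -> (1 <= j <= 4)%nat ->
     set_eq (chamberK i) (chamberK j) -> i = j) /\
  (* sign vectors w.r.t. (varpi5, varpi6, varpi7) *)
  (forall i x, (1 <= i <= 4)%nat -> chamberK i x ->
     let '(s5, s6, s7) := chamber_signs i in
     has_sign s5 (pairing varpi5 x) /\ has_sign s6 (pairing varpi6 x) /\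
     has_sign s7 (pairing varpi7 x)) /\
  (* the adjacency graph is the chain 1 - 2 - 3 - 4 *)
  (forall i j, (1 <= i <= 4)%nat -> (1 <= j <= 4)%nat ->
     (adjacent (chamberK i) (chamberK j) <-> (j = S i \/ i = S j))) /\
  (* the wall between chamber i and i+1 is the hyperplane orthogonal to varpi_(8-i) *)
  (forall i w, (1 <= i <= 3)%nat -> In w weights_2_7 ->
     (adjacent_via w (chamberK i) (chamberK (S i)) <->
      (w = wall i \/ w = wneg (wall i)))).
Proof.
  split; [|split; [|split; [|split]]].
  - intros S. split.
    + intros [x [Hr HS]]. destruct (region_chamber x Hr) as [i [Hi Hk]].
      exists i; split; auto. intro y. rewrite HS. apply chamber_char; auto.
    + intros [i [Hi Heq]]. exists (wit i). split.
      * eapply K_region; [eauto|apply wit_in; auto].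
      * intro y. rewrite (Heq y). symmetry. apply chamber_char; auto. apply wit_in; auto.
  - intros i j Hi Hj Heq.
    pose proof (proj1 (Heq (wit i)) (wit_in i Hi)) as H.
    destruct i as [|[|[|[|[|i]]]]]; try lia;
    destruct j as [|[|[|[|[|j]]]]]; try lia; simpl wit in H; ksolve.
  - intros i x Hi Hx.
    destruct i as [|[|[|[|[|i]]]]]; try lia; simpl; ksolve.
  - intros i j Hi Hj. split.
    + intros [w [Hin Ha]].
      destruct (Nat.eq_dec i j) as [<-|Hne].
      { exfalso; eapply adj_same; eauto. }
      destruct Ha as [p [v [Hw [Hz [Hu [eps [He H]]]]]]].
      destruct i as [|[|[|[|[|i]]]]]; try lia;
      destruct j as [|[|[|[|[|j]]]]]; try lia; try tauto; exfalso.
      * assert (pairing varpi7 p = 0) by (eapply pz_pos_neg; eauto; sgn).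
        assert (pairing varpi6 p = 0) by (eapply pz_pos_neg; eauto; sgn). ksolve.
      * assert (pairing varpi7 p = 0) by (eapply pz_pos_neg; eauto; sgn).
        assert (pairing varpi5 p = 0) by (eapply pz_pos_neg; eauto; sgn). ksolve.
      * assert (pairing varpi6 p = 0) by (eapply pz_pos_neg; eauto; sgn).
        assert (pairing varpi5 p = 0) by (eapply pz_pos_neg; eauto; sgn). ksolve.
      * assert (pairing varpi7 p = 0) by (eapply pz_neg_pos; eauto; sgn).
        assert (pairing varpi6 p = 0) by (eapply pz_neg_pos; eauto; sgn). ksolve.
      * assert (pairing varpi7 p = 0) by (eapply pz_neg_pos; eauto; sgn).
        assert (pairing varpi5 p = 0) by (eapply pz_neg_pos; eauto; sgn). ksolve.
      * assert (pairing varpi6 p = 0) by (eapply pz_neg_pos; eauto; sgn).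
        assert (pairing varpi5 p = 0) by (eapply pz_neg_pos; eauto; sgn). ksolve.
    + intros [->| ->].
      * exists (wall i). split; [|apply wall_adj; lia].
        destruct i as [|[|[|[|i]]]]; try lia; in_tac.
      * exists (wall j). split; [|apply adj_sym, wall_adj; lia].
        destruct j as [|[|[|[|j]]]]; try lia; in_tac.
  - intros i w Hi Hin. split.
    + intros Ha. pose proof Ha as [p [v [Hw [Hz [Hu [eps [He H]]]]]]].
      assert (Hw0 : pairing (wall i) p = 0 /\ In (wall i) weights_2_7).
      { destruct i as [|[|[|[|i]]]]; try lia; cbn [wall]; (split; [|in_tac]).
        - eapply pz_pos_neg; eauto; sgn.
        - eapply pz_pos_neg; eauto; sgn.
        - eapply pz_pos_neg; eauto; sgn. }
      destruct Hw0 as [Hw0 Hin0].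
      destruct (Hu _ Hin0 Hw0) as [E|E]; [left; auto|right].
      rewrite E, wneg_invol; reflexivity.
    + intros [->| ->]; [apply wall_adj; auto | apply adj_wneg, wall_adj; auto].
Qed.
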